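(* Let $(P_n(x))_{n \ge 0}$ be a splitting sequence of a nice polynomial $P_0(x)$, with binary string $s_0 s_1 \ldots$, and suppose $s_{i-1} s_i s_{i+1} = LLS$ for some $i \in \mathbb{N}$. If $P_i(x)$ and $P_{i+2}(x)$ are both $k$-good for some $k \in \mathbb{N}$, then $P_i(x)$ is $(k+1)$-good.
   Context: $P \equiv Q \pmod{M}$ for $P,Q,M \in \mathbb{Z}[x]$ means $M$ divides $P-Q$ in $\mathbb{Z}[x]$. For $n \in \mathbb{N}_0$, $P \in \mathbb{Z}[x]$ is $n$-good if $P(x^{2^m}) \equiv P(x)^{2^m} \pmod{2^{m+1}}$ for every $m \in \{0,\dots,n\}$. A polynomial is nice if it is irreducible in $\mathbb{Z}[x]$ with leading and constant coefficients in $\{\pm 1\}$. Splitting sequence of an irreducible $P \in \mathbb{Z}[x]$: $(P_n)_{n \ge 0}$ with $P_0 = P$ such that for each $n$: if $P_n$ is irreducible, $P_{n+1}(x) = P_n(x^2)$; if $P_n$ is reducible, then (as $P_{n-1}$ is irreducible and $P_n(x) = P_{n-1}(x^2)$ factors as a product of exactly two irreducibles in $\mathbb{Z}[x]$) $P_{n+1}$ is one of these two factors. Its binary string has $s_n = L$ if $P_n$ is irreducible and $s_n = S$ otherwise. *)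

(* Defs.v *)
From HB Require Import structures.
From mathcomp Require Import all_boot all_order all_algebra.
Set Implicit Arguments. Unset Strict Implicit. Unset Printing Implicit Defensive.
Import Order.TTheory GRing.Theory Num.Theory.
Local Open Scope ring_scope.

Definition polycongr (P Q M : {poly int}) : Prop :=
  exists R : {poly int}, P - Q = M * R.

Definition good (n : nat) (P : {poly int}) : Prop :=
  forall m : nat, (m <= n)%N ->
    polycongr (P \Po 'X^(2 ^ m)) (P ^+ (2 ^ m)) ((2 ^ m.+1)%:R)%:P.

Definition irreducibleZx (P : {poly int}) : Prop :=
  P != 0 /\ P \isn't a GRing.unit /\
  forall A B : {poly int}, P = A * B -> A \is a GRing.unit \/ B \is a GRing.unit.

Definition nice (P : {poly int}) : Prop :=
  irreducibleZx P /\ (lead_coef P = 1 \/ lead_coef P = -1)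
  /\ (P`_0 = 1 \/ P`_0 = -1).

Definition splitting_sequence (P : {poly int}) (Ps : nat -> {poly int}) : Prop :=
  Ps 0%N = P /\
  forall n : nat,
    (irreducibleZx (Ps n) -> Ps n.+1 = Ps n \Po 'X^2) /\
    (~ irreducibleZx (Ps n) ->
       exists A B : {poly int}, irreducibleZx A /\ irreducibleZx B /\
         Ps n = A * B /\ (Ps n.+1 = A \/ Ps n.+1 = B)).

Inductive letter := L | S.
Definition s_of (Ps : nat -> {poly int}) (n : nat) (c : letter) : Prop :=
  match c with L => irreducibleZx (Ps n) | S => ~ irreducibleZx (Ps n) end.

(* Main.v *)
Require Import Defs.
From mathcomp Require Import all_boot all_order all_algebra.
From mathcomp Require Import ring lra zify.
From Stdlib Require Import Classical.
Set Implicit Arguments. Unset Strict Implicit. Unset Printing Implicit Defensive.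
Import Order.TTheory GRing.Theory Num.Theory.
Local Open Scope ring_scope.


Section Lems.
Implicit Types p q r : {poly int}.

Lemma even_comp p : even_poly (p \Po 'X^2) = p.
Proof.
apply/polyP => i; rewrite coef_even_poly coef_comp_poly_Xn //.
by rewrite -muln2 dvdn_mull // mulnK.
Qed.

Lemma odd_comp p : odd_poly (p \Po 'X^2) = 0.
Proof.
apply/polyP => i; rewrite coef_odd_poly coef_comp_poly_Xn // coef0.
by rewrite dvdn2 /= odd_double.
Qed.

Lemma compX2_inj p q : p \Po 'X^2 = q \Po 'X^2 -> p = q.
Proof. by move=> h; rewrite -(even_comp p) h even_comp. Qed.

Lemma even_odd_gen p q : even_poly (p \Po 'X^2 + (q \Po 'X^2) * 'X) = p /\
  odd_poly (p \Po 'X^2 + (q \Po 'X^2) * 'X) = q.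
Proof.
rewrite even_polyD odd_polyD even_polyMX odd_polyMX !even_comp !odd_comp.
by rewrite mul0r addr0 add0r.
Qed.

Lemma decA p : p = even_poly p \Po 'X^2 + (odd_poly p \Po 'X^2) * 'X.
Proof. by rewrite poly_even_odd. Qed.

Lemma X2N : ('X^2 : {poly int}) \Po (- 'X) = 'X^2.
Proof. by rewrite comp_Xn_poly sqrrN. Qed.

Lemma compX2N p : (p \Po 'X^2) \Po (- 'X) = p \Po 'X^2.
Proof. by rewrite -comp_polyA X2N. Qed.

Lemma compN p : p \Po (- 'X) = even_poly p \Po 'X^2 - (odd_poly p \Po 'X^2) * 'X.
Proof.
rewrite {1}(decA p) comp_polyD comp_polyM !compX2N comp_polyX.
by rewrite mulrN.
Qed.

End Lems.


Definition t2 : {poly int} := (2 : int)%:P.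
Definition dvp (j : nat) (p : {poly int}) := exists r, p = t2 ^+ j * r.

Lemma t2X j : t2 ^+ j = ((2 : int) ^+ j)%:P.
Proof. by rewrite /t2 rmorphXn. Qed.

Lemma dvpP j p : dvp j p <-> forall i, ((2:int) ^+ j %| p`_i)%Z.
Proof.
split=> [[r ->] i|h]; first by rewrite t2X coefCM dvdz_mulr.
exists (\poly_(i < size p) (p`_i %/ (2 ^+ j))%Z).
apply/polyP=> i; rewrite t2X coefCM coef_poly.
case: ltnP => hi; first by rewrite mulrC divzK.
by rewrite mulr0 nth_default.
Qed.

Lemma dvp0 j : dvp j 0.
Proof. by exists 0; rewrite mulr0. Qed.
Lemma dvpD j p q : dvp j p -> dvp j q -> dvp j (p + q).
Proof. by move=> [r ->] [s ->]; exists (r + s); rewrite mulrDr. Qed.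
Lemma dvpN j p : dvp j p -> dvp j (- p).
Proof. by move=> [r ->]; exists (- r); rewrite mulrN. Qed.
Lemma dvpB j p q : dvp j p -> dvp j q -> dvp j (p - q).
Proof. by move=> hp hq; apply: dvpD => //; apply: dvpN. Qed.
Lemma dvpMl j p q : dvp j p -> dvp j (q * p).
Proof. by move=> [r ->]; exists (q * r); rewrite mulrCA. Qed.
Lemma dvpMr j p q : dvp j p -> dvp j (p * q).
Proof. by move=> h; rewrite mulrC; apply: dvpMl. Qed.
Lemma dvpM i j p q : dvp i p -> dvp j q -> dvp (i + j) (p * q).
Proof. by move=> [r ->] [s ->]; exists (r * s); rewrite exprD; ring. Qed.
Lemma dvp_le i j p : (i <= j)%N -> dvp j p -> dvp i p.
Proof.
move=> /subnKC <- [r ->]; exists (t2 ^+ (j - i) * r).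
by rewrite exprD mulrA.
Qed.
Lemma dvp_t2 j p : dvp j (t2 ^+ j * p).
Proof. by exists p. Qed.
Lemma dvp_even j p : dvp j p -> dvp j (even_poly p).
Proof. by move=> /dvpP h; apply/dvpP => i; rewrite coef_even_poly. Qed.
Lemma dvp_odd j p : dvp j p -> dvp j (odd_poly p).
Proof. by move=> /dvpP h; apply/dvpP => i; rewrite coef_odd_poly. Qed.
Lemma dvp_comp j p q : dvp j p -> dvp j (p \Po q).
Proof. by move=> [r ->]; exists (r \Po q); rewrite comp_polyM t2X comp_polyC. Qed.
Lemma dvp_desub j n p : (0 < n)%N -> dvp j (p \Po 'X^n) -> dvp j p.
Proof.
move=> n0 /dvpP h; apply/dvpP => i; have := h (i * n)%N.
by rewrite coef_comp_poly_Xn // dvdn_mull // mulnK.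
Qed.
Lemma dvp_half j p : dvp j.+1 (t2 * p) -> dvp j p.
Proof.
move=> [r]; rewrite exprS -mulrA => /mulfI h; exists r; apply: h.
by rewrite /t2 polyC_eq0.
Qed.
Lemma dvp_sq j a b : dvp j.+1 (a - b) -> dvp j.+2 (a ^+ 2 - b ^+ 2).
Proof.
move=> [r] h; have -> : a = b + t2 ^+ j.+1 * r by rewrite -h; ring.
exists (b * r + t2 ^+ j * r ^+ 2); rewrite !exprS; ring.
Qed.
Lemma dvp_cancel j (e o : {poly int}) : e`_0 = 1 -> dvp j (e * o) -> dvp j o.
Proof.
move=> e0 /dvpP h; apply/dvpP => i; elim: i {-2}i (leqnn i) => [|n IH] i hi.
  by move: (h 0%N); rewrite coef0M e0 mul1r; case: i hi.
have := h i; rewrite coefM big_ord_recl /= subn0 e0 mul1r.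
rewrite rpredDr //; apply: rpred_sum => l _; apply: dvdz_mull; apply: IH.
rewrite /bump /=; lia.
Qed.


Lemma congr_dvp m P Q : polycongr P Q ((2 ^ m)%:R)%:P <-> dvp m (P - Q).
Proof.
have e : ((2 ^ m)%:R : int)%:P = t2 ^+ m by rewrite t2X natrX.
by rewrite /polycongr /dvp e.
Qed.

Lemma comp_sq (A q : {poly int}) : (A ^+ 2) \Po q = (A \Po q) ^+ 2.
Proof. by rewrite !expr2 comp_polyM. Qed.

Lemma good_D k A : good k A -> (1 <= k)%N -> dvp k.+1 (A \Po 'X^2 - A ^+ 2).
Proof.
case: k => [//|k] hg _.
have h1 := proj1 (congr_dvp _ _ _) (hg k.+1 (leqnn _)).
have h0 := dvp_sq (proj1 (congr_dvp _ _ _) (hg k (leqnSn _))).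
apply: (@dvp_desub _ (2 ^ k)); first by rewrite expn_gt0.
rewrite comp_polyB -comp_polyA comp_Xn_poly -exprM comp_sq.
rewrite -expnSr.
have e : (A ^+ (2 ^ k)) ^+ 2 = A ^+ (2 ^ k.+1) by rewrite -exprM expnS mulnC.
rewrite e in h0.
have -> : A \Po 'X^(2 ^ k.+1) - (A \Po 'X^(2 ^ k)) ^+ 2 =
   (A \Po 'X^(2 ^ k.+1) - A ^+ (2 ^ k.+1)) - ((A \Po 'X^(2 ^ k)) ^+ 2 - A ^+ (2 ^ k.+1)) by ring.
exact: dvpB.
Qed.

Lemma D_good k Q : good k Q -> dvp k.+2 (Q \Po 'X^2 - Q ^+ 2) -> good k.+1 Q.
Proof.
move=> hg hD m; rewrite leq_eqVlt => /orP[/eqP ->|]; last by apply: hg.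
apply/congr_dvp.
have h0 := dvp_sq (proj1 (congr_dvp _ _ _) (hg k (leqnn _))).
have e : (Q ^+ (2 ^ k)) ^+ 2 = Q ^+ (2 ^ k.+1) by rewrite -exprM expnS mulnC.
rewrite e in h0.
have h2 := dvp_comp ('X^(2 ^ k)) hD.
rewrite comp_polyB -comp_polyA comp_Xn_poly -exprM comp_sq in h2.

rewrite -expnSr in h2.
have -> : Q \Po 'X^(2 ^ k.+1) - Q ^+ (2 ^ k.+1) =
   (Q \Po 'X^(2 ^ k.+1) - (Q \Po 'X^(2 ^ k)) ^+ 2) + ((Q \Po 'X^(2 ^ k)) ^+ 2 - Q ^+ (2 ^ k.+1)) by ring.
exact: dvpD.
Qed.

Lemma const_one (P : {poly int}) : dvp 2 (P \Po 'X^2 - P ^+ 2) ->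
  P`_0 \is a GRing.unit -> P`_0 = 1.
Proof.
move=> /dvpP /(_ 0%N); rewrite coefB coef_comp_poly_Xn // dvdn0 div0n expr2 coef0M.
move=> h /orP[] /eqP e //; rewrite e in h; by [].
Qed.


Lemma dvp_t2mul j p : dvp j p -> dvp j.+1 (t2 * p).
Proof. by move=> [r ->]; exists r; rewrite exprS mulrA. Qed.

Lemma core k (Q R A : {poly int}) : (1 <= k)%N -> Q = R \Po 'X^2 ->
  Q \Po 'X^2 = A * (A \Po (- 'X)) -> A`_0 = 1 ->
  dvp k.+1 (A \Po 'X^2 - A ^+ 2) -> dvp k.+2 (Q \Po 'X^2 - Q ^+ 2).
Proof.
move=> k1 hR hQ2 A0 hDA.
have e0 : (even_poly A)`_0 = 1 by rewrite coef_even_poly.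
have hoA : odd_poly A = odd_poly A by [].
move: (decA A) (compN A) e0 hoA; move: (even_poly A) {1 2 4}(odd_poly A) => e o hA hN e0 hoA.
have hA2 : A ^+ 2 = (e ^+ 2 + 'X * o ^+ 2) \Po 'X^2 + ((t2 * (e * o)) \Po 'X^2) * 'X.
  rewrite {1}hA !comp_polyD !expr2 !comp_polyM comp_polyX /t2 comp_polyC -!expr2.
  ring.
have hD : A \Po 'X^2 - A ^+ 2 = (A - (e ^+ 2 + 'X * o ^+ 2)) \Po 'X^2
     + ((- (t2 * (e * o))) \Po 'X^2) * 'X.
  by rewrite hA2 !raddfB raddfN /=; ring.
rewrite hD in hDA.
have hodd := dvp_odd hDA; have hev := dvp_even hDA.
rewrite (proj2 (even_odd_gen _ _)) in hodd.
rewrite (proj1 (even_odd_gen _ _)) in hev.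
have hok : dvp k o.
  apply: (@dvp_cancel _ e) => //.
  by apply: dvp_half; rewrite -[t2 * _]opprK; apply: dvpN.
have hQ : Q = e ^+ 2 - 'X * o ^+ 2.
  apply: compX2_inj; rewrite hQ2 {1}hA hN !raddfB /= !expr2 !comp_polyM comp_polyX.
  ring.
have hoQ : odd_poly (e ^+ 2) = even_poly (o ^+ 2).
  have : odd_poly Q = 0 by rewrite hR odd_comp.
  rewrite hQ raddfB /= mulrC odd_polyMX => /eqP; rewrite subr_eq0 => /eqP //.
have ho1 : dvp k.+1 o.
  have h1 := dvp_odd hev.
  rewrite !raddfB raddfD /= mulrC odd_polyMX hoQ in h1.
  have -> : o = (odd_poly A - (even_poly (o ^+ 2) + even_poly (o ^+ 2)))
              + t2 * even_poly (o ^+ 2).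
    by rewrite hoA /t2 mul_polyC scaler_nat mulr2n; ring.
  apply: dvpD => //; apply: (@dvp_le _ (k + k).+1); first by lia.
  by apply/dvp_t2mul/dvp_even; rewrite expr2; apply: dvpM.
have hE : dvp k.+1 (e \Po 'X^2 - e ^+ 2).
  have -> : e \Po 'X^2 - e ^+ 2 = (A - (e ^+ 2 + 'X * o ^+ 2)) - (o \Po 'X^2) * 'X
     + 'X * (o * o) by rewrite {1}hA; ring.
  apply: dvpD; first by apply: dvpB => //; apply/dvpMr/dvp_comp.
  by apply/dvpMl/dvpMr.
have [F hF] := hE; have [u hu] := ho1.
have eE : e \Po 'X^2 = e ^+ 2 + t2 ^+ k.+1 * F by rewrite -hF; ring.
rewrite hQ !raddfB /= !expr2 !comp_polyM comp_polyX -expr2 eE hu comp_polyM t2X comp_polyC -t2X.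
exists (e^+2*F + t2^+k*F^+2 - t2^+k*'X ^+ 2*(u \Po 'X^2)^+2 + t2*t2^+k*e^+2*'X*u^+2
   - t2*t2*(t2^+k)^+3*'X ^+ 2*u^+4).
rewrite !(exprS t2); ring.
Qed.



Local Notation pZtoQ := (map_poly (intr : int -> rat)).

Lemma irr_size (A : {poly int}) : irreducibleZx A -> A`_0 \is a GRing.unit ->
  (1 < size A)%N.
Proof.
move=> [nz [nu _]] u0; rewrite ltnNge; apply/negP => hs.
move: nu; rewrite poly_unitE u0 andbT eqn_leq hs /= size_poly_gt0 nz //.
Qed.

Lemma irr_poly (A : {poly int}) : irreducibleZx A -> (1 < size A)%N ->
  irreducible_poly A.
Proof.
move=> [nz [nu hirr]] hs; split => // q sq dq.
have [r hr] := dvdpP_int dq.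
case: (hirr _ _ hr) => hu.
  by move: hu; rewrite poly_unitE size_zprimitive (negPf sq).
have q0 : q != 0 by apply: contraNneq nz => q0; rewrite hr q0 zprimitive0 mul0r.
move: hu; rewrite poly_unitE => /andP[/size_poly1P [c c0 hc] _].
apply: (eqp_trans (y := zprimitive q)).
  by rewrite {1}[q]zpolyEprim eqp_scale // zcontents_eq0.
by rewrite hr hc mulrC mul_polyC eqp_sym eqp_scale.
Qed.

Lemma NN (p : {poly int}) : (p \Po (- 'X)) \Po (- 'X) = p.
Proof. by rewrite -comp_polyA raddfN /= comp_polyX opprK comp_polyXr. Qed.

Lemma size_N (p : {poly int}) : size (p \Po (- 'X)) = size p.
Proof. by rewrite size_comp_poly2 // size_polyN size_polyX. Qed.

Lemma coef0_N (p : {poly int}) : (p \Po (- 'X))`_0 = p`_0.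
Proof.
by rewrite compN coefB coefMX /= subr0 coef_comp_poly_Xn // coef_even_poly.
Qed.

Lemma even_of (p : {poly int}) : p \Po (- 'X) = p -> p = even_poly p \Po 'X^2.
Proof.
move=> h; have h2 := compN p; rewrite h in h2.
have h3 := decA p.
have : t2 * ((odd_poly p \Po 'X^2) * 'X) = 0.
  rewrite /t2 mul_polyC scaler_nat mulr2n.
  set E := even_poly p \Po 'X^2 in h2 h3 *; set O := (odd_poly p \Po 'X^2) * 'X in h2 h3 *.
  have -> : O + O = (E + O) - (E - O) by ring.
  by rewrite -h3 -h2 subrr.
move/eqP; rewrite mulf_eq0 /t2 polyC_eq0 /= => /eqP h4.
by rewrite {1}h3 h4 addr0.
Qed.

Lemma unit_even (A : {poly int}) : (1 < size A)%N -> A = even_poly A \Po 'X^2 ->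
  even_poly A \is a GRing.unit -> False.
Proof.
move=> sA hA; rewrite poly_unitE => /andP[/size_poly1P [c c0 hc] _].
by move: sA; rewrite hA hc comp_polyC size_polyC c0.
Qed.

Lemma fact_lem (Q A B : {poly int}) : irreducibleZx Q -> irreducibleZx A ->
  irreducibleZx B -> Q \Po 'X^2 = A * B -> A`_0 = 1 -> B`_0 = 1 ->
  B = A \Po (- 'X).
Proof.
move=> iQ iA iB hAB A0 B0.
have sA : (1 < size A)%N by apply: irr_size; rewrite ?A0 ?unitr1.
have sB : (1 < size B)%N by apply: irr_size; rewrite ?B0 ?unitr1.
have iAq : irreducible_poly (pZtoQ A) by apply/irreducible_rat_int/irr_poly.
have iBq : irreducible_poly (pZtoQ B) by apply/irreducible_rat_int/irr_poly.
have hNN : (A \Po - 'X) * (B \Po - 'X) = A * B by rewrite -comp_polyM -hAB compX2N.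
have mN : forall p, pZtoQ (p \Po - 'X) = pZtoQ p \Po - 'X.
  by move=> p; rewrite map_comp_poly rmorphN /= map_polyX.
have hdiv : pZtoQ A %| pZtoQ (A \Po - 'X) * pZtoQ (B \Po - 'X).
  by rewrite -rmorphM /= hNN rmorphM /= dvdp_mulIl.
have c0 : forall (a b : {poly int}), a`_0 = 1 -> b`_0 = 1 -> pZtoQ a %= pZtoQ b -> a = b.
  move=> a b a0 b0 /eqpP [[c1 c2] /andP [n1 n2] /= h].
  have ec : c1 = c2.
    by have := congr1 (fun p : {poly rat} => p`_0) h; rewrite /= !coefZ !coef_map /= a0 b0 !rmorph1 !mulr1.
  rewrite ec in h; apply: (map_inj_poly _ _ : injective pZtoQ) => //; first exact: intr_inj.
  by apply: (@scalerI _ _ c2).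

case: (boolP (coprimep (pZtoQ A) (pZtoQ (A \Po - 'X)))) => hc.
  rewrite Gauss_dvdpr // in hdiv.
  have h2 : pZtoQ (A \Po - 'X) %| pZtoQ B.
    by have := dvdp_comp_poly (- 'X) hdiv; rewrite -!mN NN.
  case: (irredp_XsubCP iBq h2) => h3.
    by move/eqp_size: h3; rewrite size_poly1 size_rat_int_poly size_N => h; lia.
  by symmetry; apply: c0 => //; rewrite coef0_N.
rewrite coprimep_def in hc.
have hg : gcdp (pZtoQ A) (pZtoQ (A \Po - 'X)) %= pZtoQ A.
  by apply: iAq => //; apply: dvdp_gcdl.
have ha : pZtoQ A %| pZtoQ (A \Po - 'X) by rewrite -(eqp_dvdl _ hg) dvdp_gcdr.
have eA : A = A \Po - 'X.
  apply: c0 => //; first by rewrite coef0_N.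
  by rewrite -dvdp_size_eqp // !size_rat_int_poly size_N.
exfalso.
have A0' : A != 0 by rewrite -size_poly_gt0; lia.
have eB : B \Po - 'X = B by rewrite -eA in hNN; apply: (mulfI A0').
have hA' := even_of (esym eA); have hB' := even_of eB.
have hQ : Q = even_poly A * even_poly B.
  by apply: compX2_inj; rewrite hAB {1}hA' {1}hB' comp_polyM.
case: iQ => _ [_ hQi]; case: (hQi _ _ hQ) => hu.
  exact: (unit_even sA hA').
exact: (unit_even sB hB').
Qed.


Lemma coef0_X2 (p : {poly int}) : (p \Po 'X^2)`_0 = p`_0.
Proof. by rewrite coef_comp_poly_Xn // dvdn0 div0n. Qed.

Lemma units_seq P0 Ps : nice P0 -> splitting_sequence P0 Ps ->
  forall n, (Ps n)`_0 \is a GRing.unit.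
Proof.
move=> [_ [_ h0]] [e hs]; elim=> [|n IH].
  by rewrite e; case: h0 => ->; rewrite ?unitr1 ?unitrN1.
case: (classic (irreducibleZx (Ps n))) => h.
  by rewrite ((hs n).1 h) coef0_X2.
have [A [B [_ [_ [hAB [->| ->]]]]]] := (hs n).2 h;
  by move: IH; rewrite hAB coef0M unitrM => /andP[].
Qed.

Unset Implicit Arguments.

Theorem lemma3p16 (P0 : {poly int}) (Ps : nat -> {poly int}) (i k : nat) :
  nice P0 -> splitting_sequence P0 Ps ->
  (1 <= i)%N -> (1 <= k)%N ->
  s_of Ps i.-1 L -> s_of Ps i L -> s_of Ps i.+1 S ->
  good k (Ps i) -> good k (Ps i.+2) ->
  good k.+1 (Ps i).
Proof.
move=> hn hs i1 k1 hL0 hL1 hS gi gi2.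
have U := units_seq hn hs.
case: i i1 hL0 hL1 hS gi gi2 => [//|i] _ /= hL0 hL1 hS gi gi2.
have [_ hss] := hs.
have hR := (hss i).1 hL0.
have hQ2 := (hss i.+1).1 hL1.
have [A [B [iA [iB [hAB hpick]]]]] := (hss i.+2).2 hS.
have Q0 : (Ps i.+1)`_0 = 1.
  by apply: const_one (U _); apply: (dvp_le _ (good_D gi k1)); lia.
have [A' [B' [iA' [iB' [hAB' hA']]]]] : exists A' B', irreducibleZx A' /\
   irreducibleZx B' /\ Ps i.+1 \Po 'X^2 = A' * B' /\ Ps i.+3 = A'.
  case: hpick => h; first by exists A, B; rewrite -hQ2.
  by exists B, A; rewrite mulrC -hQ2.
have gA := good_D gi2 k1; rewrite hA' in gA.
have A0 : A'`_0 = 1.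
  apply: const_one; first by apply: (dvp_le _ gA); lia.
  by rewrite -hA' U.
have B0 : B'`_0 = 1.
  by have := congr1 (fun p : {poly int} => p`_0) hAB'; rewrite /= coef0_X2 Q0 coef0M A0 mul1r.
have hB := fact_lem hL1 iA' iB' hAB' A0 B0.
apply: D_good => //.
apply: (core (A := A') k1 hR) => //; by rewrite hAB' hB.
Qed.
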